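(* Let $s\ge1$, $m_1,n_1>0$, $0<N<1$, $1<n_2<m_2$, and let $n(x)=n_1(x+n_2)^N$, $m(x)=m_1(x+m_2)^M$, $a^*(x)=\dfrac{-1+\sqrt{1+4(x+1)^s}}{2(x+1)^s}$. If $M>N+s$ and $$m_2>\Big\{\frac{n_1}{2m_1}(1+\sqrt5)\Big\}^{1/(M-N-s)},$$ then $a^*(x)>\dfrac{n(x)}{m(x)}$ for all $x\ge0$. *)

(* Defs.v *)
From Stdlib Require Import Reals.
Open Scope R_scope.

Definition nfun (n1 n2 N x : R) : R := n1 * Rpower (x + n2) N.
Definition mfun (m1 m2 M x : R) : R := m1 * Rpower (x + m2) M.
Definition astar (s x : R) : R :=
  (-1 + sqrt (1 + 4 * Rpower (x + 1) s)) / (2 * Rpower (x + 1) s).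

(* Main.v *)
Require Import Defs.
From Stdlib Require Import Reals Lra.
Open Scope R_scope.

Lemma rp_pos a e : 0 < Rpower a e.
Proof. unfold Rpower; apply exp_pos. Qed.

Lemma rp_lt_base a b e : 0 < a -> a < b -> 0 < e -> Rpower a e < Rpower b e.
Proof.
  intros Ha Hab He; unfold Rpower; apply exp_increasing.
  apply Rmult_lt_compat_l; [lra|]. apply ln_increasing; lra.
Qed.

Lemma rp_le_base a b e : 0 < a -> a <= b -> 0 < e -> Rpower a e <= Rpower b e.
Proof.
  intros Ha Hab He; destruct (Req_dec a b) as [->|]; [lra|].
  left; apply rp_lt_base; lra.
Qed.

Theorem lemma4p2 (s m1 n1 N M n2 m2 : R)
  (hs : 1 <= s) (hm1 : 0 < m1) (hn1 : 0 < n1)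
  (hN0 : 0 < N) (hN1 : N < 1)
  (hn2 : 1 < n2) (hn2m2 : n2 < m2)
  (hM : M > N + s)
  (hm2 : m2 > Rpower (n1 / (2 * m1) * (1 + sqrt 5)) (/ (M - N - s))) :
  forall x : R, 0 <= x -> astar s x > nfun n1 n2 N x / mfun m1 m2 M x.
Proof.
  intros x hx.
  set (K := n1 / (2 * m1) * (1 + sqrt 5)).
  assert (h5 : 2 < sqrt 5).
  { rewrite <- (sqrt_square 2) by lra. apply sqrt_lt_1; lra. }
  assert (hK : 0 < K).
  { unfold K. apply Rmult_lt_0_compat; [|lra]. apply Rdiv_lt_0_compat; lra. }
  set (t := Rpower (x + 1) s).
  assert (ht : 1 <= t).
  { unfold t. replace 1 with (Rpower 1 s) at 1.
    - apply rp_le_base; lra.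
    - unfold Rpower; rewrite ln_1, Rmult_0_r; apply exp_0. }
  set (S := sqrt (1 + 4 * t)).
  assert (hS2 : S * S = 1 + 4 * t) by (apply sqrt_sqrt; lra).
  assert (hS0 : 0 <= S) by apply sqrt_pos.
  assert (hSle : S <= sqrt 5 * t).
  { assert (E5 : sqrt (5 * (t * t)) = sqrt 5 * t).
    { rewrite sqrt_mult by nra. rewrite sqrt_square by lra. reflexivity. }
    rewrite <- E5. unfold S. apply sqrt_le_1; nra. }
  assert (hA : 2 / ((1 + sqrt 5) * t) <= astar s x).
  { unfold astar. fold t. fold S.
    assert (S - 1 = 4 * t / (S + 1)).
    { field_simplify_eq; [nra|lra]. }
    replace (-1 + S) with (S - 1) by ring. rewrite H.
    apply (Rmult_le_reg_r ((1 + sqrt 5) * t * (2 * t) * (S + 1))).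
    { apply Rmult_lt_0_compat; [|lra]. apply Rmult_lt_0_compat; nra. }
    field_simplify; try lra. nra. }
  set (C := Rpower (x + m2) N).
  set (A := Rpower (x + n2) N).
  set (D := Rpower (x + m2) s).
  set (E := Rpower (x + m2) (M - N - s)).
  assert (hAC : A < C) by (apply rp_lt_base; lra).
  assert (hA0 : 0 < A) by apply rp_pos.
  assert (hDt : t <= D) by (apply rp_le_base; lra).
  assert (hEK : K < E).
  { apply Rlt_le_trans with (Rpower m2 (M - N - s)).
    - replace K with (Rpower (Rpower K (/ (M - N - s))) (M - N - s)).
      + apply rp_lt_base; [apply rp_pos | exact hm2 | lra].
      + rewrite Rpower_mult, Rinv_l by lra. apply Rpower_1; exact hK.
    - apply rp_le_base; lra. }
  assert (hB : mfun m1 m2 M x = m1 * (C * D * E)).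
  { unfold mfun, C, D, E. rewrite <- !Rpower_plus. f_equal. f_equal. ring. }
  assert (hn : nfun n1 n2 N x = n1 * A) by reflexivity.
  rewrite hB, hn.
  apply Rlt_le_trans with (2 / ((1 + sqrt 5) * t)); [|exact hA].
  assert (hC0 : 0 < C) by apply rp_pos.
  assert (hKe : K * (2 * m1) = n1 * (1 + sqrt 5)).
  { unfold K. field. lra. }
  apply (Rmult_lt_reg_r (m1 * (C * D * E) * ((1 + sqrt 5) * t))).
  { apply Rmult_lt_0_compat; [apply Rmult_lt_0_compat|]; try nra.
    apply Rmult_lt_0_compat; [nra|lra]. }
  field_simplify; try (split; nra); try nra.
  - assert (n1 * A * (1 + sqrt 5) * t < n1 * C * (1 + sqrt 5) * t).
    { apply Rmult_lt_compat_r; [lra|]. apply Rmult_lt_compat_r; [lra|]. nra. }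
    assert (n1 * (1 + sqrt 5) * C * t <= 2 * m1 * C * D * E).
    { assert (hKt : K * t <= E * D).
      { apply Rmult_le_compat; lra. }
      rewrite <- hKe.
      assert (0 < 2 * m1 * C) by nra.
      assert (2 * m1 * C * (K * t) <= 2 * m1 * C * (E * D)).
      { apply Rmult_le_compat_l; lra. }
      nra. }
    nra.
Qed.
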